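(* Consider the scheduling policy SIS, with ties broken arbitrarily, with a transmission oracle in $TO_h$ and proactive hearing control $P$, against an adversary $\mathcal{A}(b,r)$ with $0\le r<1/h$. Define $k_1=b$ and $k_{i+1}=\frac{k_i+b}{1-rh}$. When a packet $p$ arrives at the $i$-th queue $v_i$ on its path, then there are at most $k_i-1$ packets requiring any queue in the path of $p$ (i.e., for each node on the path of $p$, at most $k_i-1$ packets in the system that still have to pass through that node) with a priority higher than that of $p$.
   Context: Multi-hop radio network model: a network is a simple graph with $n$ nodes; time is divided into synchronous rounds. Packets are injected by an adversary, each with its complete path fixed at injection. Each node keeps a single, unbounded queue of packets to be forwarded. In each round a node transmits at most one message; a node $w$ hears a message of a neighbor $u$ in a round iff $u$ is the only neighbor of $w$ transmitting in that round. When $v$ transmits a packet whose next node on its path is $w$ and $w$ hears it, the packet leaves $v$ and is absorbed at $w$ or appended to $w$'s queue. A transmission oracle tells each node in each round whether to transmit. Proactive hearing control $P$: in a round in which the oracle tells $v$ to transmit, $v$ first learns which neighbors would hear its transmission, and the scheduling policy selects a packet among the queued packets whose next node is one of these neighbors (if any), which is then transmitted and heard. A directed link $(u,w)$ is up in a round if a packet transmitted by $u$ to $w$ would be heard by $w$; $TO_h$ is the class of transmission oracles under which every link is up at least once in every $h$ consecutive rounds. An adversary $\mathcal{A}(b,r)$ ($b$ positive integer, $0\le r\le1$) specifies each injected packet's path and satisfies: for every interval $\tau$ of consecutive rounds and every node $v$, the number of packets injected during $\tau$ whose path contains $v$ is at most $r|\tau|+b$. SIS (Shortest-In-System) gives priority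 to the packet that has been in the system for the shortest time. *)

(* Defs.v *)
From HB Require Import structures.
From mathcomp Require Import all_boot all_order all_algebra.
Set Implicit Arguments. Unset Strict Implicit. Unset Printing Implicit Defensive.
Import Order.TTheory GRing.Theory Num.Theory.

Local Open Scope nat_scope.

(* The adversary's injection pattern is  A : nat -> seq (seq T) :
   A s is the list of paths of the packets injected in round s.
   A packet is identified by (s, j) with j < size (A s). *)
Definition pkt := (nat * nat)%type.

Section Model.
Variable T : finType.

Definition pinj (q : pkt) : nat := q.1.
Definition ppath (A : nat -> seq (seq T)) (q : pkt) : seq T := nth [::] (A q.1) q.2.
Definition valid (A : nat -> seq (seq T)) (q : pkt) : bool := q.2 < size (A q.1).
(* index (0-based) of the destination on the path; indices < last_idx are queues *)
Definition last_idx A (q : pkt) : nat := (size (ppath A q)).-1.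

Definition simple_graph (adj : rel T) : Prop := symmetric adj /\ irreflexive adj.

Definition is_route (adj : rel T) (s : seq T) : bool :=
  if s is x :: s' then path adj x s' && uniq s else false.

Definition injected_through (A : nat -> seq (seq T)) (v : T) (t1 len : nat) : nat :=
  \sum_(t1 <= s < t1 + len) count (fun s => v \in s) (A s).

Definition adversary (R : realFieldType) (adj : rel T) (b : nat) (r : R)
  (A : nat -> seq (seq T)) : Prop :=
  (forall s pth, pth \in A s -> is_route adj pth) /\
  (forall v t1 len, ((injected_through A v t1 len)%:R <= r * len%:R + b%:R)%R).

(* transmission oracle: tx t u = oracle tells u to transmit in round t.
   w hears u in round t iff u is the only neighbour of w transmitting. *)
Definition hears (adj : rel T) (tx : nat -> T -> bool) (t : nat) (u w : T) : bool :=
  [&& adj u w, tx t u & [forall x, (adj x w && tx t x) ==> (x == u)]].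

Definition oracle_TO (adj : rel T) (h : nat) (tx : nat -> T -> bool) : Prop :=
  forall u w, adj u w -> forall t, exists t', t <= t' < t + h /\ hears adj tx t' u w.

Definition tiebreak (tb : rel pkt) : Prop :=
  irreflexive tb /\ transitive tb /\ (forall q q', q != q' -> tb q q' || tb q' q).

(* SIS priority: higher tb q p  <->  q has higher priority than p
   (q has been in the system for a shorter time, ties broken by tb) *)
Definition higher (tb : rel pkt) (q p : pkt) : bool :=
  (pinj p < pinj q) || ((pinj q == pinj p) && tb q p).

(* Execution.  pos t q = index on its path of the node where packet q is,
   at the beginning of round t after the injections of round t
   (meaningful for t >= pinj q).  Packets injected in round s are placed in the
   queue of their source at the beginning of round s.  A packet with
   pos t q < last_idx A q is in the queue of node (nth _ (ppath A q) (pos t q));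
   pos t q = last_idx A q means it has been absorbed at its destination. *)

Definition queued (A : nat -> seq (seq T)) (pos : nat -> pkt -> nat) (t : nat)
  (v : T) (q : pkt) : bool :=
  [&& valid A q, pinj q <= t, pos t q < last_idx A q &
      nth v (ppath A q) (pos t q) == v].

(* under proactive hearing control P: q is eligible at v in round t if q is
   queued at v and its next node hears v in round t *)
Definition eligible (adj : rel T) (tx : nat -> T -> bool) A pos t v q : bool :=
  queued A pos t v q && hears adj tx t v (nth v (ppath A q) (pos t q).+1).

Definition moved (pos : nat -> pkt -> nat) (t : nat) (q : pkt) : Prop :=
  pos t.+1 q = (pos t q).+1.

Definition sis_P_execution (adj : rel T) (tx : nat -> T -> bool)
  (A : nat -> seq (seq T)) (tb : rel pkt) (pos : nat -> pkt -> nat) : Prop :=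
  (forall q, valid A q -> pos (pinj q) q = 0) /\
  (forall q t, valid A q -> pinj q <= t ->
     pos t.+1 q = pos t q \/ moved pos t q) /\
  (forall q t, valid A q -> pinj q <= t -> moved pos t q ->
     exists v, eligible adj tx A pos t v q /\
       forall q', eligible adj tx A pos t v q' -> ~~ higher tb q' q) /\
  (forall t v q, eligible adj tx A pos t v q ->
     exists q', eligible adj tx A pos t v q' /\ moved pos t q').

(* q still requires the queue at v at round t: q is in the system and v is one
   of the nodes on the remaining part of its path where it still has to be
   queued (current node up to, excluding, the destination) *)
Definition requires (A : nat -> seq (seq T)) (pos : nat -> pkt -> nat) (t : nat)
  (q : pkt) (v : T) : bool :=
  [&& valid A q, pinj q <= t, pos t q < last_idx A q &
      v \in drop (pos t q) (take (last_idx A q) (ppath A q))].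

Definition n_higher_requiring (A : nat -> seq (seq T)) (pos : nat -> pkt -> nat)
  (tb : rel pkt) (p : pkt) (t : nat) (v : T) : nat :=
  \sum_(s < t.+1) \sum_(j < size (A s))
     (higher tb (s : nat, j : nat) p && requires A pos t (s : nat, j : nat) v).

(* p arrives at the (j+1)-th node of its path (0-based index j) at round t:
   j = 0: injection round; j > 0: it moved there during round t-1 *)
Definition arrives (A : nat -> seq (seq T)) (pos : nat -> pkt -> nat)
  (p : pkt) (j t : nat) : Prop :=
  pinj p <= t /\ pos t p = j /\
  (t = pinj p \/ (pinj p < t /\ pos t.-1 p < j)).

End Model.

(* kseq b r h i = k_{i+1}:  k_1 = b,  k_{i+1} = (k_i + b) / (1 - r h) *)
Fixpoint kseq (R : realFieldType) (b : nat) (r : R) (h : nat) (i : nat) : R :=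
  match i with
  | 0 => b%:R
  | i'.+1 => ((kseq b r h i' + b%:R) / (1 - r * h%:R))%R
  end.

(* Main.v *)
Require Import Defs.
From HB Require Import structures.
From mathcomp Require Import all_boot all_order all_algebra.
From mathcomp Require Import zify lra.
Import Order.TTheory GRing.Theory Num.Theory.
Set Implicit Arguments. Unset Strict Implicit.

Lemma sum_nth_count (X : Type) (a : pred X) (x0 : X) (s : seq X) :
  \sum_(i < size s) a (nth x0 s i) = count a s.
Proof.
elim: s => [|x s IH]; first by rewrite big_ord0.
by rewrite /= big_ord_recl /= IH.
Qed.

Lemma mem_drop_le (X : eqType) (m n : nat) (s : seq X) x :
  m <= n -> x \in drop n s -> x \in drop m s.
Proof.
move=> le; rewrite -(subnK le) -drop_drop => /mem_drop //.
Qed.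

Lemma nth_notin_drop (X : eqType) (l : seq X) k x0 :
  uniq l -> k < size l -> nth x0 l k \notin drop k.+1 l.
Proof.
move=> ul kl; apply/negP => hin.
move: ul; rewrite -(cat_take_drop k.+1 l) cat_uniq => /and3P [_ /hasP H _].
apply: H; exists (nth x0 l k) => //.
have -> : nth x0 l k = nth x0 (take k.+1 l) k by rewrite nth_take.
apply: mem_nth; rewrite size_take; case: ifP => //; lia.
Qed.

Lemma valid_uniq (T : finType) (A : nat -> seq (seq T)) adj q :
  (forall s pth, pth \in A s -> is_route adj pth) -> valid A q -> uniq (ppath A q).
Proof.
move=> Hr vq; have := Hr q.1 (ppath A q) (mem_nth [::] vq).
by case: (ppath A q) => //= x s /andP [].
Qed.

Lemma last_idx_le (T : finType) (A : nat -> seq (seq T)) q :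
  last_idx A q <= size (ppath A q).
Proof. rewrite /last_idx; lia. Qed.

Lemma req_mono (T : finType) (A : nat -> seq (seq T)) pos q t w :
  (forall q t, valid A q -> pinj q <= t -> pos t.+1 q = pos t q \/ moved pos t q) ->
  pinj q <= t -> requires A pos t.+1 q w -> requires A pos t q w.
Proof.
move=> E2 le /and4P [vq _ lt hin].
have hle : pos t q <= pos t.+1 q by case: (E2 q t vq le) => ->; lia.
apply/and4P; split => //; first lia.
exact: (mem_drop_le hle hin).
Qed.

Lemma queued_req (T : finType) (A : nat -> seq (seq T)) pos s u q :
  queued A pos s u q -> requires A pos s q u.
Proof.
move=> /and4P [vq le lt /eqP hu]; apply/and4P; split => //.
have hsz := last_idx_le A q.
rewrite -{1}hu -(nth_take _ lt).
have -> : forall l : seq T, nth u l (pos s q) = nth u (drop (pos s q) l) 0.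
  by move=> l; rewrite nth_drop addn0.
apply: mem_nth; rewrite size_drop size_take; case: ifP => _; rewrite subn_gt0 //.
exact: leq_trans lt hsz.
Qed.

Lemma leave (T : finType) (A : nat -> seq (seq T)) adj pos s u q :
  (forall s pth, pth \in A s -> is_route adj pth) ->
  queued A pos s u q -> moved pos s q -> ~~ requires A pos s.+1 q u.
Proof.
move=> Hr /and4P [vq le lt /eqP hu] mv; apply/negP => /and4P [_ _ _].
rewrite mv -{1}hu -(nth_take _ lt).
have hsz := last_idx_le A q.
apply/negP; apply: nth_notin_drop.
  exact/take_uniq/(valid_uniq Hr).
rewrite size_take; case: ifP => // _; exact: leq_trans lt hsz.
Qed.

Lemma queued_node (T : finType) (A : nat -> seq (seq T)) pos s u u' q :
  queued A pos s u q -> queued A pos s u' q -> u = u'.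
Proof.
move=> /and4P [_ _ lt /eqP hu] /and4P [_ _ _ /eqP hu'].
have hsz := last_idx_le A q.
rewrite -hu -hu'; apply: set_nth_default; exact: leq_trans lt hsz.
Qed.

Definition Lc (T : finType) (A : nat -> seq (seq T)) pos tb (p : pkt) t w :=
  \sum_(s < t.+1) \sum_(i < size (A s))
     [&& higher tb (s : nat, i : nat) p, requires A pos t (s : nat, i : nat) w
       & ~~ requires A pos t.+1 (s : nat, i : nat) w].

Lemma req_in (T : finType) (A : nat -> seq (seq T)) pos t q w :
  requires A pos t q w -> w \in ppath A q.
Proof. by case/and4P => _ _ _ /mem_drop /mem_take. Qed.

Lemma step (T : finType) (A : nat -> seq (seq T)) pos tb p t w :
  (forall q t, valid A q -> pinj q <= t -> pos t.+1 q = pos t q \/ moved pos t q) ->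
  n_higher_requiring A pos tb p t.+1 w + Lc A pos tb p t w <=
  n_higher_requiring A pos tb p t w + count (fun l => w \in l) (A t.+1).
Proof.
move=> E2; rewrite /n_higher_requiring big_ord_recr /= addnAC.
apply: leq_add.
  rewrite /Lc -big_split; apply: leq_sum => s _; rewrite -big_split.
  apply: leq_sum => i _ /=.
  have le : pinj (s : nat, i : nat) <= t by rewrite /pinj /= -ltnS.
  have := @req_mono _ A pos (s : nat, i : nat) t w E2 le.
  case: (requires A pos t.+1 _ w); case: (requires A pos t _ w);
    case: (higher _ _ _) => //= H; by have := H isT.
rewrite -(sum_nth_count _ [::]); apply: leq_sum => i _.
case/boolP: (requires A pos t.+1 (t.+1, i : nat) w) => [/req_in H|]; last by rewrite andbF.
by rewrite /ppath /= in H; rewrite H; case: (higher _ _ _).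
Qed.

Lemma iter_step (T : finType) (A : nat -> seq (seq T)) pos tb p t0 d w :
  (forall q t, valid A q -> pinj q <= t -> pos t.+1 q = pos t q \/ moved pos t q) ->
  n_higher_requiring A pos tb p (t0 + d) w + \sum_(t0 <= s < t0 + d) Lc A pos tb p s w <=
  n_higher_requiring A pos tb p t0 w + injected_through A w t0.+1 d.
Proof.
move=> E2; elim: d => [|d IH].
  by rewrite !addn0 /injected_through !big_geq ?addn0.
move: IH; rewrite /injected_through !addSn addnS.
rewrite (@big_nat_recr _ _ _ (t0+d).+1 t0.+1) ?ltnS ?leq_addr //.
rewrite (@big_nat_recr _ _ _ (t0+d) t0) ?leq_addr //=.
have := step tb p (t0 + d) w E2.
set c1 := count _ (A (t0+d).+1); lia.
Qed.

Lemma sum_nat_ge_term (F : nat -> nat) a b s :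
  a <= s < b -> F s <= \sum_(a <= i < b) F i.
Proof.
move=> hs; rewrite (bigD1_seq s) ?mem_index_iota ?iota_uniq //=; exact: leq_addr.
Qed.

Lemma windows (F : nat -> nat) t0 h :
  0 < h -> forall n,
  (forall a, t0 <= a -> a + h <= t0 + n * h -> exists s, a <= s < a + h /\ 0 < F s) ->
  n <= \sum_(t0 <= s < t0 + n * h) F s.
Proof.
move=> h0; elim => [|n IH] H; first by [].
have -> : t0 + n.+1 * h = t0 + n * h + h by rewrite mulSn; lia.
rewrite (@big_cat_nat _ _ _ (t0 + n * h)) ?leq_addr //=.
have [s [hs Fs]] : exists s, t0 + n * h <= s < t0 + n * h + h /\ 0 < F s.
  by apply: H; [exact: leq_addr | rewrite mulSn; lia].
have := sum_nat_ge_term F hs.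
have : n <= \sum_(t0 <= s < t0 + n * h) F s.
  apply: IH => a ha hah; apply: H => //; rewrite mulSn; lia.
lia.
Qed.

Lemma ord_term (n : nat) (F : 'I_n -> nat) (i : 'I_n) : F i <= \sum_(k < n) F k.
Proof. by rewrite (bigD1 i) //= leq_addr. Qed.

Lemma higher_tot tb q p :
  tiebreak tb -> q != p -> higher tb q p || higher tb p q.
Proof.
move=> [_ [_ tot]] qp; rewrite /higher.
case: (ltngtP (pinj p) (pinj q)) => //= E.
by have := tot q p qp.
Qed.

Lemma find_arrival (T : finType) (A : nat -> seq (seq T)) pos p :
  (forall q, valid A q -> pos (pinj q) q = 0) ->
  (forall q t, valid A q -> pinj q <= t -> pos t.+1 q = pos t q \/ moved pos t q) ->
  valid A p -> forall s, pinj p <= s -> forall j, pos s p = j ->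
  exists t', [/\ pinj p <= t' <= s, arrives A pos p j t' &
                 forall x, t' <= x <= s -> pos x p = j].
Proof.
move=> E1 E2 vp; elim => [|s IH] hs j hj.
  have e : pinj p = 0 by lia.
  exists 0; split => //; first by rewrite e.
    by split; [rewrite e | split; [| left]].
  by move=> x hx; have -> : x = 0 by lia.
case: (ltngtP (pinj p) s.+1) => [lt|gt|eq]; last 2 first.
- lia.
- exists s.+1; split => //; first by rewrite eq leqnn.
    by split; [rewrite eq | split; [| left]].
  by move=> x hx; have -> : x = s.+1 by lia.
have le : pinj p <= s by lia.
case: (E2 p s vp le) => [e|mv].
  have [t' [ht' arr hc]] := IH le j (etrans (esym e) hj).
  exists t'; split => //; first lia.
  move=> x hx; case: (ltngtP x s.+1) => [l|g|->] //; first (apply: hc; lia).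
  lia.
exists s.+1; split => //; first by rewrite leqnn andbT.
  split => //; split => //; right; split => //.
  rewrite /=; move: mv; rewrite /moved hj; lia.
by move=> x hx; have -> : x = s.+1 by lia.
Qed.

Theorem lemma4 (R : realFieldType) (T : finType) (adj : rel T) (h b : nat) (r : R)
  (tx : nat -> T -> bool) (A : nat -> seq (seq T)) (tb : rel pkt)
  (pos : nat -> pkt -> nat) :
  simple_graph adj -> (0 < h)%N -> (0 < b)%N ->
  (0 <= r)%R -> (r * h%:R < 1)%R ->
  oracle_TO adj h tx -> adversary adj b r A -> tiebreak tb ->
  sis_P_execution adj tx A tb pos ->
  forall (p : pkt) (j t : nat),
    valid A p -> (j.+1 < size (ppath A p))%N -> arrives A pos p j t ->
    forall v, v \in ppath A p ->
      ((n_higher_requiring A pos tb p t v)%:R <= kseq b r h j - 1)%R.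
Proof.
move=> _ h0 b0 r0 rh1 HO [Hr Hinj] Htb [E1 [E2 [E3 E4]]] [s0 i0] j t vp.
have r1 : (r < 1)%R.
  have : (1 <= h%:R :> R)%R by rewrite ler1n.
  nra.
elim: j t => [|j IH] t hj [hle [hpos harr]] v hv.
-
  have et : t = pinj (s0, i0).
    case: harr => // [[_ ]]; lia.
  rewrite /pinj /= in et; subst t.
  have hcnt : (n_higher_requiring A pos tb (s0, i0) s0 v + 1 <=
               count (fun l => v \in l) (A s0))%N.
    rewrite /n_higher_requiring big_ord_recr /=.
    rewrite big1 ?add0n; last first.
      move=> s _; apply: big1 => i _.
      have hs : (s < s0)%N := ltn_ord s.
      by rewrite /higher /pinj /= ltnNge (ltnW hs) /= (ltn_eqF hs).
    rewrite -(sum_nth_count _ [::]).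
    pose k0 : 'I_(size (A s0)) := Ordinal vp.
    rewrite (bigD1 k0) //= [X in (_ <= X)%N](bigD1 k0) //=.
    have -> : higher tb (s0, i0) (s0, i0) = false.
      by rewrite /higher /pinj /= ltnn eqxx /=; case: Htb => irr _; exact: irr.
    rewrite /ppath /= in hv; rewrite hv /= add0n addnC leq_add2l.
    apply: leq_sum => i _.
    case/boolP: (requires A pos s0 (s0, nat_of_ord i) v) => [/req_in H|]; last by rewrite andbF.
    by rewrite /ppath /= in H; rewrite H; case: (higher _ _ _).
  have hb : (count (fun l => v \in l) (A s0) <= b)%N.
    have := Hinj v s0 1; rewrite /injected_through addn1 big_nat1 mulr1 => H.
    rewrite -ltnS -(ltr_nat R) -addn1 natrD; lra.
  have : (n_higher_requiring A pos tb (s0, i0) s0 v + 1 <= b)%N by lia.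
  rewrite -(ler_nat R) natrD /=; lra.
- case: harr => [et | [lt hprev]].
    by move: hpos; rewrite et (E1 _ vp).
  set p := (s0, i0) in vp hj hle hpos hv lt hprev *.
  set t1 := t.-1 in hprev.
  have ht : t = t1.+1 by rewrite /t1; lia.
  have le1 : (pinj p <= t1)%N by rewrite /t1; lia.
  have hj1 : pos t1 p = j.
    case: (E2 p t1 vp le1) => e; move: hpos; rewrite ht e /moved => e'.
      by move: hprev; rewrite e'; lia.
    lia.
  have [t' [ht' arr hc]] := find_arrival E1 E2 vp le1 hj1.
  have hj' : (j.+1 < size (ppath A p))%N by lia.
  set u := nth v (ppath A p) j.
  set nx := nth v (ppath A p) j.+1.
  have hu : u \in ppath A p by apply: mem_nth; exact: ltnW.
  have IHu := IH t' hj' arr u hu.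
  have IHv := IH t' hj' arr v hv.
  set K' := kseq b r h j in IHu IHv.
  set d := t - t'.
  have ht't : t = t' + d by rewrite /d; lia.
  have Hu := iter_step tb p t' d u E2; rewrite -ht't in Hu.
  have Hv := iter_step tb p t' d v E2; rewrite -ht't in Hv.
  have Iu := Hinj u t'.+1 d.
  have Iv := Hinj v t'.+1 d.
  have t't1 : (t' <= t1)%N by case/andP: ht'.
  set n := ((t1 - t') %/ h)%N.
  have hn1 : (t' + n * h <= t1)%N.
    by rewrite -leq_subRL // leq_trunc_div.
  have hn2 : (d <= n.+1 * h)%N.
    by rewrite /d ht subSn //; exact: ltn_ceil.
  clearbody n.
  have hW : (n <= \sum_(t' <= s < t) Lc A pos tb p s u)%N.
    rewrite (@big_cat_nat _ _ _ (t' + n * h)) ?leq_addr //=; last first.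
      by apply: leq_trans hn1 _; rewrite ht.
    apply: leq_trans (leq_addr _ _).
    apply: windows => // a ha hah.
    have adjun : adj u nx.
      have : is_route adj (ppath A p) := Hr _ _ (mem_nth [::] vp).
      move: hj; rewrite /u /nx; case: (ppath A p) => [|x s'] //= hj2.
      move=> /andP [/(pathP v) H _]; apply: H; exact: ltnW hj2.
    have [s [/andP [hsa hsb] hear]] := HO u nx adjun a.
    exists s; rewrite hsa hsb; split => //.
    have hs1 : (s.+1 <= t1)%N := leq_trans (leq_trans hsb hah) hn1.
    have posS : pos s p = j by apply: hc; rewrite (leq_trans ha hsa) /= ltnW.
    have posS1 : pos s.+1 p = j by apply: hc; rewrite hs1 andbT; apply: leq_trans ha _; apply: leq_trans hsa _.
    have hjs : (j < size (ppath A p))%N by apply: ltnW.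
    have qp : queued A pos s u p.
      apply/and4P; split => //.
      - case/andP: ht' => h1 _; apply: leq_trans h1 _; exact: leq_trans ha hsa.
      - by rewrite posS /last_idx; move: hj; clear; lia.
      - by rewrite posS /u; apply/eqP; apply: set_nth_default.
    have ep : eligible adj tx A pos s u p.
      rewrite /eligible qp /= posS.
      rewrite (@set_nth_default _ _ v u) //; exact: hear.
    have [q' [eq' mq']] := E4 s u p ep.
    have qq' : queued A pos s u q' by case/andP: eq'.
    have /and4P [vq' lq' _ _] := qq'.
    have [v' [ev' nohigh]] := E3 q' s vq' lq' mq'.
    have ev'u : v' = u.
      apply: (queued_node (pos := pos) (s := s) (q := q')); last exact: qq'.
      by case/andP: ev'.
    have nh : ~~ higher tb p q' by apply: nohigh; rewrite ev'u.
    have qnp : q' != p.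
      apply/eqP => e; move: mq'; rewrite e /moved posS posS1; move/eqP; by rewrite eqn_leq ltnn andbF.
    have hq : higher tb q' p.
      by case/orP: (higher_tot Htb qnp) => // H; rewrite H in nh.
    have rq := queued_req qq'.
    have nrq := leave Hr qq' mq'.
    move: vq' lq' hq rq nrq; case: q' {eq' mq' qq' ev' nohigh nh qnp} => s' i' vq' lq' hq rq nrq.
    rewrite /Lc.
    have hs' : (s' < s.+1)%N by rewrite ltnS.
    rewrite (bigD1 (Ordinal hs')) //= (bigD1 (Ordinal vq')) //=.
    by rewrite hq rq nrq.
  have Nu : (n <= n_higher_requiring A pos tb p t' u + injected_through A u t'.+1 d)%N.
    apply: leq_trans hW _; apply: leq_trans (leq_addl _ _) Hu.
  have Nv : (n_higher_requiring A pos tb p t v <=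
             n_higher_requiring A pos tb p t' v + injected_through A v t'.+1 d)%N.
    exact: leq_trans (leq_addr _ _) Hv.
  move: Nu Nv hn2; rewrite -!(ler_nat R) !natrD natrM.
  move: IHu IHv Iu Iv; rewrite -/p /=; rewrite -/K'.
  move: (n_higher_requiring A pos tb p t' u) (n_higher_requiring A pos tb p t' v)
        (n_higher_requiring A pos tb p t v) (injected_through A u t'.+1 d)
        (injected_through A v t'.+1 d) => nu nv nt iu iv.
  have hR : (0 <= h%:R :> R)%R by rewrite ler0n.
  have c0 : (0 < 1 - r * h%:R)%R by lra.
  set K := ((K' + b%:R) / (1 - r * h%:R))%R.
  have eK : (K * (1 - r * h%:R) = K' + b%:R)%R.
    by rewrite /K divfK // gt_eqF.
  move: (d%:R)%R (n%:R)%R (h%:R)%R (b%:R)%R hR c0 eK rh1 => dR nR hR' bR hR c0 eK rh1.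
  move=> IHu IHv Iu Iv Nu Nv hn2.
  have H1 : (dR <= (K' + r * dR + bR) * hR')%R by nra.
  have H2 : (dR <= K * hR')%R by nra.
  nra.
Qed.
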